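(* Let $\mathfrak g$ be a finite-dimensional nilpotent Lie algebra over a field $k$ of characteristic zero. If $\mathfrak g$ admits an LR-structure, then $\mathfrak g$ also admits a complete LR-structure.
   Context: An LR-algebra is a vector space $A$ with a bilinear product $\cdot$ satisfying $x\cdot(y\cdot z)=y\cdot(x\cdot z)$ and $(x\cdot y)\cdot z=(x\cdot z)\cdot y$ for all $x,y,z\in A$. An LR-structure on a Lie algebra $\mathfrak g$ is an LR-algebra product $\cdot$ on the underlying vector space of $\mathfrak g$ such that $x\cdot y-y\cdot x=[x,y]$ for all $x,y$. With $R(x)y=y\cdot x$, an LR-structure is called complete if $R(x)$ is nilpotent for every $x$. *)

(* Defs.v *)
From HB Require Import structures.
From mathcomp Require Import all_boot all_order all_algebra.
Set Implicit Arguments. Unset Strict Implicit. Unset Printing Implicit Defensive.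
Import GRing.Theory.
Local Open Scope ring_scope.

Definition bilinear_op (k : fieldType) (V : vectType k) (f : V -> V -> V) : Prop :=
  (forall (a : k) (x y z : V), f (a *: x + y) z = a *: f x z + f y z) /\
  (forall (a : k) (x y z : V), f x (a *: y + z) = a *: f x y + f x z).

Definition is_lie_bracket (k : fieldType) (V : vectType k) (br : V -> V -> V) : Prop :=
  [/\ bilinear_op br,
      (forall x : V, br x x = 0) &
      (forall x y z : V, br x (br y z) + br y (br z x) + br z (br x y) = 0)].

(* Lower central series: lcs br 0 = g, lcs br (i+1) = [g, lcs br i]
   (the linear span of the brackets [x, y] with y in lcs br i). *)
Inductive lcs (k : fieldType) (V : vectType k) (br : V -> V -> V) : nat -> V -> Prop :=
  | lcs_all : forall x, lcs br 0 x
  | lcs_br : forall i x y, lcs br i y -> lcs br i.+1 (br x y)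
  | lcs_0 : forall i, lcs br i.+1 0
  | lcs_add : forall i u v, lcs br i.+1 u -> lcs br i.+1 v -> lcs br i.+1 (u + v)
  | lcs_scale : forall i (a : k) u, lcs br i.+1 u -> lcs br i.+1 (a *: u).

Definition lie_nilpotent (k : fieldType) (V : vectType k) (br : V -> V -> V) : Prop :=
  exists m : nat, forall x : V, lcs br m x -> x = 0.

Definition is_LR_algebra (k : fieldType) (V : vectType k) (p : V -> V -> V) : Prop :=
  [/\ bilinear_op p,
      (forall x y z : V, p x (p y z) = p y (p x z)) &
      (forall x y z : V, p (p x y) z = p (p x z) y)].

Definition is_LR_structure (k : fieldType) (V : vectType k)
    (br : V -> V -> V) (p : V -> V -> V) : Prop :=
  is_LR_algebra p /\ (forall x y : V, p x y - p y x = br x y).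

Definition Rmul (k : fieldType) (V : vectType k) (p : V -> V -> V) (x : V) : V -> V :=
  fun y => p y x.

Definition LR_complete (k : fieldType) (V : vectType k) (p : V -> V -> V) : Prop :=
  forall x : V, exists n : nat, forall y : V, iter n (Rmul p x) y = 0.

(* Main.v *)
Require Import Defs.
From HB Require Import structures.
From mathcomp Require Import all_boot all_order all_algebra.
Import GRing.Theory.
Local Open Scope ring_scope.
Set Implicit Arguments. Unset Strict Implicit. Unset Printing Implicit Defensive.

Lemma linfunE_lin (k : fieldType) (V : vectType k) (f : V -> V) :
  (forall (a : k) x y, f (a *: x + y) = a *: f x + f y) -> linfun f =1 f.
Proof.
move=> H.
pose fL : {linear V -> V} := HB.pack f (GRing.isLinear.Build _ _ _ _ f (fun a x y => H a x y)).
exact: (lfunE fL).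
Qed.

Definition tp (k : fieldType) (V : vectType k) (t : 'End(V)) (n : nat) : 'End(V) :=
  iter n (fun g => (t \o g)%VF) \1%VF.

Lemma tpE (k : fieldType) (V : vectType k) (t : 'End(V)) n v : tp t n v = iter n t v.
Proof.
elim: n => [|n IH] /=; first by rewrite /tp /= id_lfunE.
by rewrite /tp /= comp_lfunE -/(tp t n) IH.
Qed.

Lemma iter_lin0 (k : fieldType) (V : vectType k) (t : 'End(V)) n : iter n t 0 = 0.
Proof. by elim: n => [|n IH] //=; rewrite IH linear0. Qed.

Lemma stab (k : fieldType) (V : vectType k) (t : 'End(V)) :
  exists2 j, (j <= \dim {:V})%N &
    forall a b z, (j <= a)%N -> iter (a + b) t z = 0 -> iter a t z = 0.
Proof.
pose K i := lker (tp t i).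
have KE i v : (v \in K i) = (iter i t v == 0) by rewrite memv_ker tpE.
have Ksub i : (K i <= K i.+1)%VS.
  by apply/subvP => v; rewrite !KE /= => /eqP ->; rewrite linear0.
have dimK m : (forall i, (i < m)%N -> ~~ (K i.+1 <= K i)%VS) -> (m <= \dim (K m))%N.
  elim: m => [|m IH] H //.
  have h1 := IH (fun i lt => H i (ltnW lt)).
  have h2 : (\dim (K m) < \dim (K m.+1))%N.
    by rewrite (ltn_leqif (dimv_leqif_sup (Ksub m))) H.
  exact: leq_ltn_trans h1 h2.
case: (boolP [exists i : 'I_(\dim {:V}).+1, (K i.+1 <= K i)%VS]).
  move/existsP => [i Hi]; exists i; first by rewrite -ltnS ltn_ord.
  have H1 z : iter i.+1 t z = 0 -> iter i t z = 0.
    by move=> /eqP; rewrite -KE => /(subvP Hi); rewrite KE => /eqP.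
  move=> a b z ia; have [d ->] : exists d, a = (i + d)%N by exists (a - i)%N; rewrite subnKC.
  elim: b => [|b IH]; first by rewrite addn0.
  move=> h; apply: IH; move: h.
  rewrite -!addnA addnS -addSn => h; rewrite iterD; apply: H1.
  by rewrite -iterD addSnnS -addSn.
rewrite negb_exists => /forallP Hall.
have := dimK (\dim {:V}).+1 (fun i lt => Hall (Ordinal lt)).
by rewrite ltnNge dimvS // subvf.
Qed.

Definition fitN (k : fieldType) (V : vectType k) := (\dim {:V}).+1.

Lemma stab_n (k : fieldType) (V : vectType k) (t : 'End(V)) a b z :
  (\dim {:V} <= a)%N -> iter (a + b) t z = 0 -> iter a t z = 0.
Proof. by have [j jn Hj] := stab t => na; apply: Hj; apply: leq_trans na. Qed.

Lemma img_ker0 (k : fieldType) (V : vectType k) (t : 'End(V)) a b z :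
  (\dim {:V} <= a)%N -> iter b t (iter a t z) = 0 -> iter a t z = 0.
Proof. by move=> na h; apply: (stab_n (b:=b)) => //; rewrite addnC iterD. Qed.

Lemma iterB (k : fieldType) (V : vectType k) (t : 'End(V)) n x y :
  iter n t (x - y) = iter n t x - iter n t y.
Proof. by rewrite -!tpE linearB. Qed.

Lemma iterDl (k : fieldType) (V : vectType k) (t : 'End(V)) n x y :
  iter n t (x + y) = iter n t x + iter n t y.
Proof. by rewrite -!tpE linearD. Qed.

Definition pi1 (k : fieldType) (V : vectType k) (t : 'End(V)) : 'End(V) :=
  (tp t (fitN V) \o ((tp t (fitN V + fitN V))^-1 \o tp t (fitN V)))%VF.

Lemma pi1_img (k : fieldType) (V : vectType k) (t : 'End(V)) x :
  exists w, pi1 t x = iter (fitN V) t w.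
Proof.
by exists (((tp t (fitN V + fitN V))^-1 \o tp t (fitN V))%VF x); rewrite /pi1 comp_lfunE tpE.
Qed.

Lemma pi1_ker (k : fieldType) (V : vectType k) (t : 'End(V)) x :
  iter (fitN V) t (x - pi1 t x) = 0.
Proof.
set N := fitN V.
have kerE : lker (tp t (N + N)) = lker (tp t N).
  apply/vspaceP => v; rewrite !memv_ker !tpE; apply/eqP/eqP => h.
    exact: (stab_n (b:=N)).
  by rewrite iterD h iter_lin0.
have imgS : (limg (tp t (N + N)) <= limg (tp t N))%VS.
  apply/subvP => _ /memv_imgP[u _ ->]; rewrite tpE iterD -tpE.
  by apply: memv_img; rewrite memvf.
have dimE (f : 'End(V)) : \dim (limg f) = (\dim {:V} - \dim (lker f))%N :> nat.
  by have := limg_ker_dim f fullv; rewrite capfv => <-; rewrite addKn.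
have imgE : (limg (tp t N) <= limg (tp t (N + N)))%VS.
  by rewrite -(dimv_leqif_sup imgS).2 !dimE kerE.
have xin : tp t N x \in limg (tp t (N + N)).
  by apply: (subvP imgE); apply: memv_img; rewrite memvf.
have e : tp t (N + N) ((tp t (N + N))^-1%VF (tp t N x)) = tp t N x := limg_lfunVK xin.
have -> : pi1 t x = tp t N ((tp t (N + N))^-1%VF (tp t N x)).
  by rewrite /pi1 -/N comp_lfunE; congr (tp t N _); exact: comp_lfunE.
rewrite iterB [in X in _ - X]tpE -iterD -[iter (N + N) _ _]tpE e tpE subrr //.
Qed.

Lemma pi1_uniq (k : fieldType) (V : vectType k) (t : 'End(V)) a z :
  iter (fitN V) t a = 0 -> pi1 t (a + iter (fitN V) t z) = iter (fitN V) t z.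
Proof.
set N := fitN V => ha.
set x := a + _.
have [w ew] := pi1_img t x.
have hk := pi1_ker t x.
have hd : pi1 t x - iter N t z = a - (x - pi1 t x).
  by rewrite /x opprB addrCA opprD addNKr.
have h1 : iter N t (pi1 t x - iter N t z) = 0 by rewrite hd iterB ha hk subrr.
have h2 : pi1 t x - iter N t z = iter N t (w - z) by rewrite iterB ew.
have : iter N t (w - z) = 0.
  by apply: (img_ker0 (b:=N)) => //; rewrite -h2.
by rewrite -h2 => /eqP; rewrite subr_eq0 => /eqP.
Qed.

Lemma add0f (V : zmodType) (f : V -> V) : (forall x y, f (x + y) = f x + f y) -> f 0 = 0.
Proof. by move=> H; have h := H 0 0; rewrite addr0 in h; apply: (addrI (f 0)); rewrite -h addr0. Qed.

Lemma iter_addf (V : zmodType) (f : V -> V) : (forall x y, f (x + y) = f x + f y) ->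
  forall n x y, iter n f (x + y) = iter n f x + iter n f y.
Proof. by move=> H; elim=> [|n IH] x y //=; rewrite IH H. Qed.

Lemma iter_f0 (V : zmodType) (f : V -> V) : (forall x y, f (x + y) = f x + f y) ->
  forall n, iter n f 0 = 0.
Proof. by move=> H; elim=> [|n IH] //=; rewrite IH (add0f H). Qed.

Lemma iter_comm (V : Type) (f g : V -> V) : (forall x, f (g x) = g (f x)) ->
  forall n x, iter n g (f x) = f (iter n g x).
Proof. by move=> H; elim=> [|n IH] x //=; rewrite IH H. Qed.

Lemma nil_sum (V : zmodType) (f g : V -> V) a b :
  (forall x y, f (x + y) = f x + f y) -> (forall x y, g (x + y) = g x + g y) ->
  (forall x, f (g x) = g (f x)) ->
  (forall x, iter a f x = 0) -> (forall x, iter b g x = 0) ->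
  forall x, iter (a + b) (fun z => f z + g z) x = 0.
Proof.
move=> Hf Hg Hc Ha Hb.
have Hh : forall x y, (fun z => f z + g z) (x + y) = (fun z => f z + g z) x + (fun z => f z + g z) y.
  by move=> x y /=; rewrite Hf Hg addrACA.
pose P a b x := forall i j, ((a <= i) || (b <= j))%N -> iter i f (iter j g x) = 0.
suff C : forall n a b x, (a + b)%N = n -> P a b x -> iter n (fun z => f z + g z) x = 0.
  move=> x; apply: (C _ a b) => // i j /orP[ai|bj].
    by rewrite -(subnK ai) iterD Ha iter_f0.
  by rewrite -(subnK bj) iterD Hb !iter_f0.
elim=> [|n IH] a' b' x e PP.
  by move: e => /eqP; rewrite addn_eq0 => /andP[/eqP a0 _]; apply: (PP 0%N 0%N); rewrite a0.
have x0 : (a' == 0%N) || (b' == 0%N) -> x = 0.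
  by move=> /orP[/eqP a0|/eqP b0]; apply: (PP 0%N 0%N); rewrite ?a0 ?b0 ?orbT.
case: a' e PP x0 => [|a'] e PP x0; first by rewrite x0 // iter_f0.
case: b' e PP x0 => [|b'] e PP x0; first by rewrite x0 ?orbT // iter_f0.
rewrite iterSr iter_addf //.
rewrite (IH a' b'.+1 (f x)); first last.
- move=> i j hij; rewrite (iter_comm (f:=f) (g:=g)) // -iterSr; apply: PP.
  by rewrite ltnS.
- by move: e; rewrite addSn => -[].
rewrite (IH a'.+1 b' (g x)) ?addr0 //; first last.
- move=> i j hij; rewrite -iterSr; apply: PP; by rewrite ltnS.
- by move: e; rewrite addnS => -[].
Qed.

Lemma linHD (k : fieldType) (V : vectType k) (f : V -> V) :
  (forall (a : k) x y, f (a *: x + y) = a *: f x + f y) -> forall x y, f (x + y) = f x + f y.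
Proof. by move=> H x y; have := H 1 x y; rewrite !scale1r. Qed.

Lemma linH0 (k : fieldType) (V : vectType k) (f : V -> V) :
  (forall (a : k) x y, f (a *: x + y) = a *: f x + f y) -> f 0 = 0.
Proof. by move=> H; apply: add0f; apply: linHD. Qed.

Lemma linHZ (k : fieldType) (V : vectType k) (f : V -> V) :
  (forall (a : k) x y, f (a *: x + y) = a *: f x + f y) -> forall a x, f (a *: x) = a *: f x.
Proof. by move=> H a x; rewrite -[a *: x]addr0 H (linH0 H) addr0. Qed.

Lemma linHB (k : fieldType) (V : vectType k) (f : V -> V) :
  (forall (a : k) x y, f (a *: x + y) = a *: f x + f y) -> forall x y, f (x - y) = f x - f y.
Proof.
by move=> H x y; have := H (-1) y x; rewrite !scaleN1r addrC => ->; rewrite addrC.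
Qed.

Definition nilR (k : fieldType) (V : vectType k) (p : V -> V -> V) (y : V) :=
  exists n, forall x, iter n (Rmul p y) x = 0.

Definition Tc (k : fieldType) (V : vectType k) (p : V -> V -> V) (c : V) : 'End(V) :=
  linfun (fun x => p x c).

Lemma TcE (k : fieldType) (V : vectType k) (p : V -> V -> V) c x :
  bilinear_op p -> Tc p c x = p x c.
Proof. by move=> [H1 _]; rewrite /Tc linfunE_lin // => a u v; apply: H1. Qed.

Definition pr0 (k : fieldType) (V : vectType k) (p : V -> V -> V) (c : V) (y : V) : V :=
  y - pi1 (Tc p c) y.

Definition newp (k : fieldType) (V : vectType k) (p : V -> V -> V) (c : V) : V -> V -> V :=
  fun x y => p x (pr0 p c y).

Lemma step (k : fieldType) (V : vectType k) (br p : V -> V -> V) (c : V) :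
  is_lie_bracket br -> lie_nilpotent br -> is_LR_structure br p ->
  [/\ is_LR_structure br (newp p c), nilR (newp p c) c &
      forall y, nilR p y -> nilR (newp p c) y].
Proof.
move=> [brbil bralt brjac] [M HM] [[pbil lc rc] pbr].
set t := Tc p c; set N := fitN V.
have pl a x y z : p (a *: x + y) z = a *: p x z + p y z := pbil.1 a x y z.
have pr a x y z : p x (a *: y + z) = a *: p x y + p x z := pbil.2 a x y z.
have pD1 x y z : p (x + y) z = p x z + p y z.
  exact: (linHD (f := fun u => p u z) (fun a u v => pl a u v z)).
have pD2 x y z : p x (y + z) = p x y + p x z.
  exact: (linHD (f := fun u => p x u) (fun a u v => pr a x u v)).
have pB2 x y z : p x (y - z) = p x y - p x z.
  exact: (linHB (f := fun u => p x u) (fun a u v => pr a x u v)).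
have p01 z : p 0 z = 0 := linH0 (f := fun u => p u z) (fun a u v => pl a u v z).
have p02 z : p z 0 = 0 := linH0 (f := fun u => p z u) (fun a u v => pr a z u v).
have bD1 x y z : br (x + y) z = br x z + br y z.
  exact: (linHD (f := fun u => br u z) (fun a u v => brbil.1 a u v z)).
have bD2 x y z : br x (y + z) = br x y + br x z.
  exact: (linHD (f := fun u => br x u) (fun a u v => brbil.2 a x u v)).
have b01 z : br 0 z = 0 := linH0 (f := fun u => br u z) (fun a u v => brbil.1 a u v z).
have banti x y : br x y = - br y x.
  have := bralt (x + y); rewrite bD1 !bD2 !bralt add0r addr0 => /eqP.
  by rewrite addr_eq0 => /eqP.
have tE x : t x = p x c by rewrite /t TcE.
have I1 x y : t (p x y) = p (t x) y by rewrite !tE rc.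
have I1n m x y : iter m t (p x y) = p (iter m t x) y.
  by elim: m => [|m IH] //=; rewrite IH I1.
have I2 x y : p x (t y) = p y (t x) by rewrite !tE lc.
have I3 m u w : p u (iter m.+1 t w) = iter m t (p u (t w)).
  elim: m => [|m IH] //.
  rewrite iterS I2 iterS -I1 I2 -iterS IH /=; by [].
have NE : N = (\dim {:V}).+1 by [].
have ker_img u w : iter N t u = 0 -> p u (iter N t w) = 0.
  move=> hu; rewrite NE I3; apply: (img_ker0 (b:=N)) => //.
  by rewrite -I3 -NE I1n hu p01.
have bsym a b : p (iter N t a) (iter N t b) = p (iter N t b) (iter N t a).
  by rewrite NE !iterS -I1 I2 I1.
have dec x : x = pr0 p c x + pi1 t x by rewrite /pr0 subrK.
have kerpr0 x : iter N t (pr0 p c x) = 0 := pi1_ker t x.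
have comm x z : pr0 p c (p x z) = p (pr0 p c x) z.
  have [w ew] := pi1_img t x.
  have e1 : p x z = p (pr0 p c x) z + iter N t (p w z).
    by rewrite {1}(dec x) pD1 ew I1n.
  have hk : iter N t (p (pr0 p c x) z) = 0 by rewrite I1n kerpr0 p01.
  have := @pi1_uniq _ _ t _ (p w z) hk; rewrite -/N -e1 => e2.
  by rewrite /pr0 e2 {1}e1 addrK.
have pr0lin a y z : pr0 p c (a *: y + z) = a *: pr0 p c y + pr0 p c z.
  rewrite /pr0 linearP /= scalerBr opprD addrACA //.
have newbil : bilinear_op (newp p c).
  split=> a x y z; rewrite /newp; first exact: pl.
  by rewrite pr0lin pr.
have key x a b : iter N t a = 0 -> iter N t b = 0 -> p x (p a b) = p (pr0 p c x) (p a b).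
  move=> ha hb; have [w ew] := pi1_img t x.
  rewrite lc {1}(dec x) pD1 ew -I1n pD2 ker_img // addr0 lc //.
have newLR : is_LR_structure br (newp p c).
  split; first split.
  - exact: newbil.
  - move=> x y z; rewrite /newp !comm key ?kerpr0 // [in RHS]key ?kerpr0 //.
  - by move=> x y z; rewrite /newp rc.
  move=> x y.
  have [wx ex] := pi1_img t x; have [wy ey] := pi1_img t y.
  rewrite -/N in ex ey.
  have hA : p x (pi1 t y) = p y (pi1 t x).
    rewrite {1}(dec x) {2}(dec y) (pD1 (pr0 p c x)) (pD1 (pr0 p c y)) ex ey.
    rewrite (ker_img (pr0 p c x)) ?kerpr0 //.
    by rewrite (ker_img (pr0 p c y)) ?kerpr0 // !add0r bsym.
  rewrite /newp -pbr /pr0 !pB2 hA.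
  by rewrite opprB addrA subrK.
have NR y A : (forall u, iter N t u = 0 -> iter A (Rmul p y) u = 0) -> nilR (newp p c) y.
  move=> HA.
  set y0 := pr0 p c y.
  set f := Rmul (newp p c) y.
  have fE x : f x = p x y0 by [].
  have fadd x z : f (x + z) = f x + f z by rewrite !fE pD1.
  have Ryadd x z : Rmul p y (x + z) = Rmul p y x + Rmul p y z by rewrite /Rmul pD1.
  pose g x := br x y0.
  have gadd x z : g (x + z) = g x + g z by rewrite /g bD1.
  have fker u : iter N t u = 0 -> f u = p u y.
    move=> hu; have [w ew] := pi1_img t y.
    by rewrite fE /y0 /pr0 pB2 ew ker_img // subr0.
  have kerf m u : iter N t u = 0 -> iter N t (iter m f u) = 0.
    move=> hu; elim: m => [|m IH] //.
    by rewrite iterS fE I1n IH p01.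
  have onker m u : iter N t u = 0 -> iter m f u = iter m (Rmul p y) u.
    move=> hu; elim: m => [|m IH] //.
    by rewrite !iterS fker ?kerf // IH.
  have fimg w : f (iter N t w) = g (iter N t w).
    have := pbr (iter N t w) y0; rewrite (ker_img y0) ?kerpr0 // subr0 => e.
    by rewrite fE e.
  have onimg m w : iter m f (iter N t w) = iter m g (iter N t w).
    elim: m w => [|m IH] w //.
    have e : f (iter N t w) = iter N t (p w y0) by rewrite fE I1n.
    by rewrite (iterSr m f) (iterSr m g) e IH -e fimg.
  have glcs m v : lcs br m (iter m g v).
    elim: m => [|m IH] /=; first exact: lcs_all.
    rewrite /g banti -scaleN1r; apply: lcs_scale; exact: lcs_br.
  have g0 m : iter m g 0 = 0 by apply: iter_f0.
  exists (A + M)%N => x.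
  rewrite -/f (dec x) iter_addf //.
  have [w ew] := pi1_img t x.
  rewrite ew onimg onker ?kerpr0 // addnC iterD HA ?kerpr0 // iter_f0 //.
  by rewrite addnC iterD (HM _ (glcs M _)) g0 addr0.
split => //.
  apply: (NR c N) => u hu; rewrite -hu; apply: eq_iter => v; by rewrite tE.
by move=> y [A HA]; apply: (NR y A) => u _; exact: HA.
Qed.

Lemma many (k : fieldType) (V : vectType k) (br p : V -> V -> V) (s : seq V) :
  is_lie_bracket br -> lie_nilpotent br -> is_LR_structure br p ->
  exists p', is_LR_structure br p' /\ forall c, c \in s -> nilR p' c.
Proof.
move=> Hb Hn Hp; elim: s => [|c s [p' [h1 h2]]]; first by exists p.
have [h3 h4 h5] := step c Hb Hn h1.
exists (newp p' c); split => // d; rewrite inE => /orP[/eqP->|ds] //.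
exact: h5 (h2 d ds).
Qed.

Lemma nilR_closed (k : fieldType) (V : vectType k) (br p : V -> V -> V) :
  is_LR_structure br p ->
  [/\ nilR p 0, forall a e, nilR p e -> nilR p (a *: e) &
      forall x y, nilR p x -> nilR p y -> nilR p (x + y)].
Proof.
move=> [[pbil lc rc] pbr].
have pl a x y z : p (a *: x + y) z = a *: p x z + p y z := pbil.1 a x y z.
have pr a x y z : p x (a *: y + z) = a *: p x y + p x z := pbil.2 a x y z.
have pD1 x y z : p (x + y) z = p x z + p y z.
  exact: (linHD (f := fun u => p u z) (fun a u v => pl a u v z)).
have pD2 x y z : p x (y + z) = p x y + p x z.
  exact: (linHD (f := fun u => p x u) (fun a u v => pr a x u v)).
have pZ1 a x z : p (a *: x) z = a *: p x z.
  exact: (linHZ (f := fun u => p u z) (fun a u v => pl a u v z)).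
have pZ2 a x z : p x (a *: z) = a *: p x z.
  exact: (linHZ (f := fun u => p x u) (fun a u v => pr a x u v)).
have p02 z : p z 0 = 0 := linH0 (f := fun u => p z u) (fun a u v => pr a z u v).
split.
- by exists 1%N => x /=; rewrite /Rmul p02.
- move=> a e [n Hn]; exists n => x.
  have -> : iter n (Rmul p (a *: e)) x = a ^+ n *: iter n (Rmul p e) x.
    elim: n {Hn} => [|n IH]; first by rewrite scale1r.
    by rewrite !iterS IH /Rmul pZ1 pZ2 scalerA exprSr.
  by rewrite Hn scaler0.
- move=> x y [a Ha] [b Hb]; exists (a + b)%N => z.
  have := @nil_sum _ (Rmul p x) (Rmul p y) a b.
  rewrite /Rmul => H.
  have -> : iter (a + b) (Rmul p (x + y)) z = iter (a + b) (fun z => p z x + p z y) z.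
    by apply: eq_iter => v; rewrite /Rmul pD2.
  apply: H => //.
Qed.

Theorem mainTheorem3 (k : fieldType) (V : vectType k) (br : V -> V -> V) :
  [pchar k] =i pred0 ->
  is_lie_bracket br ->
  lie_nilpotent br ->
  (exists p : V -> V -> V, is_LR_structure br p) ->
  exists p : V -> V -> V, is_LR_structure br p /\ LR_complete p.
Proof.
move=> _ Hb Hn [p Hp].
have [p' [Hp' Hnil]] := many (vbasis fullv) Hb Hn Hp.
exists p'; split => // y.
have [N0 NZ ND] := nilR_closed Hp'.
suff : nilR p' y by [].
rewrite (coord_vbasis (memvf y)).
apply: (big_ind (nilR p')) => // i _.
apply: NZ; apply: Hnil; apply: mem_nth; by rewrite size_tuple.
Qed.
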